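(* Let $q$ be a power of an odd prime, and let $\theta\in\mathbb{F}_{q^2}\setminus\mathbb{F}_q$ satisfy $\theta^2=\mu_1\theta+\mu_0$ with $\mu_0,\mu_1\in\mathbb{F}_q$. Let \[ X=\{(s_0+s_1\theta,\ t_0+(4s_1s_0+2s_1^2\mu_1)\theta):s_0,s_1,t_0\in\mathbb{F}_q\}\subset\mathbb{F}_{q^2}^2. \] Then the induced subgraph $G_{q^2}[X]$ has maximum degree at most $2q-1$.
   Context: For a power $Q$ of an odd prime, the graph $G_Q$ has vertex set $\mathbb{F}_Q\times\mathbb{F}_Q$, and distinct vertices $(x_1,x_2)$, $(y_1,y_2)$ are adjacent if and only if $(x_1+y_1)^2=x_2+y_2$; $G_Q$ has no loops. *)

(* Defs.v *)
From HB Require Import structures.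
From mathcomp Require Import all_boot all_order all_algebra all_field.
Set Implicit Arguments. Unset Strict Implicit. Unset Printing Implicit Defensive.
Import GRing.Theory.
Local Open Scope ring_scope.

(* Adjacency in G_Q (Q = #|K|): distinct vertices x, y with (x1+y1)^2 = x2+y2. *)
Definition GQ_adj (K : fieldType) (x y : K * K) : bool :=
  (x != y) && ((x.1 + y.1) ^+ 2 == x.2 + y.2).

(* Elements of the subfield F_q of K (K of order q^2): fixed points of x |-> x^q. *)
Definition in_subfield (K : fieldType) (q : nat) (x : K) : bool := x ^+ q == x.

Definition Xset (K : finFieldType) (q : nat) (theta mu1 : K) : {set K * K} :=
  [set v | [exists s0 : K, exists s1 : K, exists t0 : K,
     [&& in_subfield q s0, in_subfield q s1, in_subfield q t0 &
         v == (s0 + s1 * theta,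
               t0 + (4 * s1 * s0 + 2 * s1 ^+ 2 * mu1) * theta)]]].

Definition induced_deg (K : finFieldType) (X : {set K * K}) (v : K * K) : nat :=
  #|[set w in X | GQ_adj v w]|.

(* Main.v *)
Require Import Defs.
From HB Require Import structures.
From mathcomp Require Import all_boot all_order all_algebra all_field.
From mathcomp Require Import ring zify.
Import GRing.Theory.
Local Open Scope ring_scope.

Section Sub.
Variable K : fieldType.
Variable q : nat.
Hypothesis qnat : [pchar K].-nat q.
Hypothesis qpos : (0 < q)%N.

Notation F := (@in_subfield K q).

Lemma inF_D x y : F x -> F y -> F (x + y).
Proof. by rewrite /in_subfield exprDn_pchar // => /eqP-> /eqP->. Qed.

Lemma inF_M x y : F x -> F y -> F (x * y).
Proof. by rewrite /in_subfield exprMn => /eqP-> /eqP->. Qed.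

Lemma inF_N x : F x -> F (- x).
Proof.
rewrite /in_subfield => /eqP hx.
have h : (x + - x) ^+ q = 0 by rewrite subrr expr0n eqn0Ngt qpos.
rewrite exprDn_pchar // hx in h.
by apply/eqP; rewrite -(addKr x ((- x) ^+ q)) h addr0.
Qed.

Lemma inF_B x y : F x -> F y -> F (x - y).
Proof. by move=> hx hy; apply: inF_D => //; apply: inF_N. Qed.

Lemma inF_V x : F x -> F (x ^-1).
Proof. by rewrite /in_subfield exprVn => /eqP->. Qed.

Lemma inF_X x n : F x -> F (x ^+ n).
Proof. by rewrite /in_subfield -exprM mulnC exprM => /eqP->. Qed.

Lemma inF_nat n : F (n%:R).
Proof.
elim: n => [|n IH]; first by rewrite /in_subfield expr0n eqn0Ngt qpos.
rewrite -addn1 natrD; apply: inF_D => //; by rewrite /in_subfield expr1n.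
Qed.

End Sub.

Ltac inF qnat qpos := repeat first [ assumption | apply: inF_nat | apply: inF_D | apply: inF_M | apply: inF_N | apply: inF_X ].

Theorem mainTheorem11 (K : finFieldType) (p k q : nat)
  (hp : prime p) (hodd : odd p) (hk : (0 < k)%N) (hq : q = (p ^ k)%N)
  (hK : #|K| = (q ^ 2)%N)
  (theta mu0 mu1 : K)
  (htheta : ~~ in_subfield q theta)
  (hmu0 : in_subfield q mu0) (hmu1 : in_subfield q mu1)
  (hrel : theta ^+ 2 = mu1 * theta + mu0) :
  forall v, v \in Xset q theta mu1 ->
    (induced_deg (Xset q theta mu1) v <= 2 * q - 1)%N.
Proof.
have hpc : p \in [pchar K] by apply: (@card_finPcharP _ p (k * 2)) => //; rewrite expnM -hq.
have qnat : [pchar K].-nat q by rewrite hq pnatX (eq_pnat _ (pcharf_eq hpc)) pnat_id.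
have qpos : (0 < q)%N by rewrite hq expn_gt0 prime_gt0.
have h2 : (2%:R : K) != 0.
  apply/negP => /eqP h2.
  have : 2%N \in [pchar K] by rewrite inE h2 eqxx.
  by rewrite (pcharf_eq hpc) inE => /eqP h; move: hodd; rewrite -h.
have hq1 : (1 < q)%N by rewrite hq -(expn0 p) ltn_exp2l ?prime_gt1.
pose Fs := [set x : K | in_subfield q x].
have hFs : (#|Fs| <= q)%N.
  have Pn0 : ('X^q - 'X : {poly K}) != 0.
    rewrite -size_poly_eq0 size_addl ?size_polyXn //.
    by rewrite size_polyN size_polyX ltnS.
  have := max_poly_roots Pn0 _ (enum_uniq (mem Fs)).
  rewrite -cardE size_addl ?size_polyXn; last first.
    by rewrite size_polyN size_polyX ltnS.
  apply; apply/allP => x; rewrite mem_enum inE /in_subfield => /eqP hx.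
  by rewrite /root !hornerE hx subrr.
have decomp : forall a b, in_subfield q a -> in_subfield q b -> a + b * theta = 0 -> b = 0.
  move=> a b ha hb hab; apply/eqP; apply/negPn/negP => hb0.
  move/negP: htheta; apply.
  have -> : theta = - a * b^-1.
    apply: (mulfI hb0); rewrite mulrCA mulfV // mulr1; apply/eqP.
    by rewrite -addr_eq0 addrC hab.
  by apply: inF_M => //; [apply: inF_N | apply: inF_V].
move=> v; rewrite inE => /existsP[s0 /existsP[s1 /existsP[t0]]].
case/and4P => hs0 hs1 ht0 /eqP hv.
pose A := [set z + s1 * theta | z in Fs].
pose B := [set (s0 + mu1 * (s1 - y) / 2%:R) + y * theta | y in Fs].
pose N := [set w in Xset q theta mu1 | GQ_adj v w].
have inj : {in N &, injective (fun w : K * K => w.1)}.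
  move=> [a b] [a' b']; rewrite !inE => /andP[_ /andP[_ /eqP e1]] /andP[_ /andP[_ /eqP e2]] /= ea.
  by subst a'; congr (_, _); apply: (addrI v.2); rewrite -e1 -e2.
have sub : (fun w : K * K => w.1) @: N \subset A :|: B.
  apply/subsetP => _ /imsetP[w wN ->].
  move: wN; rewrite !inE => /andP[/existsP[s0' /existsP[s1' /existsP[t0']]]].
  case/and4P => hs0' hs1' ht0' /eqP -> /andP[_ /eqP E].
  rewrite hv /= in E.
  set al := (s0 + s0') ^+ 2 + (s1 + s1') ^+ 2 * mu0 - t0 - t0'.
  set be := 2%:R * (s0 + s0') * (s1 + s1') + (s1 + s1') ^+ 2 * mu1
      - (4%:R * s1 * s0 + 2%:R * s1 ^+ 2 * mu1) - (4%:R * s1' * s0' + 2%:R * s1' ^+ 2 * mu1).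
  have key : al + be * theta = 0.
    have -> : al + be * theta =
      ((s0 + s1 * theta) + (s0' + s1' * theta)) ^+ 2
      - ((t0 + (4%:R * s1 * s0 + 2%:R * s1 ^+ 2 * mu1) * theta) + (t0' + (4%:R * s1' * s0' + 2%:R * s1' ^+ 2 * mu1) * theta))
      - (s1 + s1') ^+ 2 * (theta ^+ 2 - mu1 * theta - mu0).
      rewrite /al /be; ring.
    rewrite E hrel subrr; ring.
  have hal : in_subfield q al.
    by rewrite /al; inF qnat qpos. 
  have hbe : in_subfield q be.
    by rewrite /be; inF qnat qpos.
  have := decomp _ _ hal hbe key.
  have -> : be = - ((s1 - s1') * (2%:R * (s0 - s0') + mu1 * (s1 - s1'))) by rewrite /be; ring.
  move/eqP; rewrite oppr_eq0 mulf_eq0 => /orP[/eqP h1|/eqP h1].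
    have -> : s1' = s1 by apply/eqP; rewrite eq_sym -subr_eq0 h1.
    by apply/orP; left; apply/imsetP; exists s0'; rewrite ?inE.
  apply/orP; right; apply/imsetP; exists s1'; rewrite ?inE //.
  rewrite /=; congr (_ + _); apply: (mulIf h2); rewrite mulrDl mulfVK //.
  by rewrite -[LHS]addr0 -h1; ring.
have inAB : s0 + s1 * theta \in A :&: B.
  rewrite inE; apply/andP; split; apply/imsetP.
    by exists s0; rewrite ?inE.
  by exists s1; rewrite ?inE // subrr mulr0 mul0r addr0.
rewrite /induced_deg -/N -(card_in_imset inj).
apply: leq_trans (subset_leq_card sub) _.
have hU := cardsUI A B.
have hA : (#|A| <= q)%N by apply: leq_trans (leq_imset_card _ _) hFs.
have hB : (#|B| <= q)%N by apply: leq_trans (leq_imset_card _ _) hFs.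
have hI : (0 < #|A :&: B|)%N by apply/card_gt0P; exists (s0 + s1 * theta).
rewrite -(leq_add2r #|A :&: B|) hU.
apply: leq_trans (leq_add hA hB) _.
move: hI qpos; generalize #|A :&: B|; clear; move=> c; lia.
Qed.
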